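(* Consider the setting and the primal–dual iteration described in the context, with all dual variables initialized at zero: $\bm{U}_{i,j,k}^{(0)}=\bm{V}_{i,j,k}^{(0)}=\bm{0}$ for all $i\in\mathcal{V}$, $j\in\mathcal{N}_i$, $1\le k\le K$. Then for every $t\ge 0$ and all $i\in\mathcal{V}$, $j\in\mathcal{N}_i$, $k$, one has $\bm{U}_{i,j,k}^{(t)}=\bm{V}_{j,i,k}^{(t)}$, so that $\bm{Y}_{i,j,k}^{(t)}:=\bm{U}_{i,j,k}^{(t)}+\bm{V}_{j,i,k}^{(t)}=2\bm{U}_{i,j,k}^{(t)}$ satisfies $\bm{Y}_{i,j,k}^{(0)}=\bm{0}$ and, for $t\ge 1$, $$\bm{Y}_{i,j,k}^{(t)}=\bm{Y}_{i,j,k}^{(t-1)}+\rho\Big[\frac{\bm{Z}_{i,k}^{(t-1)}{\bm{Z}_{i,k}^{(t-1)}}^T}{m_{i,k}}-\frac{\bm{Z}_{j,k}^{(t-1)}{\bm{Z}_{j,k}^{(t-1)}}^T}{m_{j,k}}\Big];$$ moreover the primal step decouples across nodes: a feasible $\bm{Z}=(\bm{Z}_1,\dots,\bm{Z}_N)$ minimizes $\mathcal{L}(\bm{U}^{(t)},\bm{V}^{(t)},\bm{Z},\bm{T}^{(t-1)})$ over the feasible set if and only if, for every $i$, $\bm{Z}_i$ minimizes over $\{\bm{Z}_i:\|\bm{Z}_{i,k}\|_F^2=m_{i,k}\ \forall k\}$ the function $$\mathcal{L}'(\bm{Y}_i^{(t)},\bm{Z}_i)=R_i^c(\bm{Z}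_i)-R_i(\bm{Z}_i)+\sum_{j\in\mathcal{N}_i}\sum_{k=1}^K\Big\{\mathrm{tr}\Big[{\bm{Y}_{i,j,k}^{(t)}}^T\Big(\frac{\bm{Z}_{i,k}\bm{Z}_{i,k}^T}{m_{i,k}}-\frac{\bm{Z}_{j,k}^{(t-1)}{\bm{Z}_{j,k}^{(t-1)}}^T}{m_{j,k}}\Big)\Big]+\gamma\Big\|\frac{\bm{Z}_{i,k}\bm{Z}_{i,k}^T}{m_{i,k}}-\frac{1}{2}\Big(\frac{\bm{Z}_{i,k}^{(t-1)}{\bm{Z}_{i,k}^{(t-1)}}^T}{m_{i,k}}+\frac{\bm{Z}_{j,k}^{(t-1)}{\bm{Z}_{j,k}^{(t-1)}}^T}{m_{j,k}}\Big)\Big\|_F^2\Big\}.$$ Hence the iteration reduces to the two steps above ($\bm{Y}$-update, then per-node minimization of $\mathcal{L}'$), which can be carried out in parallel across nodes.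
   Context: Let $\mathcal{G}=(\mathcal{V},\mathcal{E})$ be a connected undirected graph with $\mathcal{V}=\{1,\dots,N\}$ and neighbor sets $\mathcal{N}_i$. Node $i$ holds a matrix $\bm{Z}_i\in\mathbb{R}^{d\times m_i}$ whose columns carry labels in $\{1,\dots,K\}$; $\bm{Z}_{i,k}\in\mathbb{R}^{d\times m_{i,k}}$ is the submatrix of columns with label $k$, and $m_{i,k}\ge 1$. Let $m=\sum_i m_i$, $\epsilon>0$, and $R_i(\bm{Z}_i)=\frac{m_i}{2m}\log\det(\bm{I}+\frac{d}{m_i\epsilon^2}\bm{Z}_i\bm{Z}_i^T)$, $R_i^c(\bm{Z}_i)=\sum_{k=1}^K\frac{m_{i,k}}{2m}\log\det(\bm{I}+\frac{d}{m_{i,k}\epsilon^2}\bm{Z}_{i,k}\bm{Z}_{i,k}^T)$. Feasible $\bm{Z}$ means $\|\bm{Z}_{i,k}\|_F^2=m_{i,k}$ for all $i,k$. For each $i\in\mathcal{V}$, $j\in\mathcal{N}_i$, $k$, there are auxiliary $d\times d$ variables $\bm{T}_{i,j,k}$ and dual variables $\bm{U}_{i,j,k},\bm{V}_{i,j,k}$, associated with the constraints $\bm{Z}_{i,k}\bm{Z}_{i,k}^T/m_{i,k}=\bm{T}_{i,j,k}$ and $\bm{Z}_{j,k}\bm{Z}_{j,k}^T/m_{j,k}=\bm{T}_{i,j,k}$. The augmented Lagrangian (penalty $\gamma>0$) is $\mathcal{L}(\bm{Z},\bm{T},\bm{U},\bm{V})=\sum_{i=1}^N\Big\{R_i^c(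\bm{Z}_i)-R_i(\bm{Z}_i)+\sum_{j\in\mathcal{N}_i}\sum_{k=1}^K\big(\mathrm{tr}[\bm{U}_{i,j,k}^T(\frac{\bm{Z}_{i,k}\bm{Z}_{i,k}^T}{m_{i,k}}-\bm{T}_{i,j,k})]+\mathrm{tr}[\bm{V}_{i,j,k}^T(\frac{\bm{Z}_{j,k}\bm{Z}_{j,k}^T}{m_{j,k}}-\bm{T}_{i,j,k})]\big)+\frac{\gamma}{2}\sum_{j\in\mathcal{N}_i}\sum_{k=1}^K\big[\|\frac{\bm{Z}_{i,k}\bm{Z}_{i,k}^T}{m_{i,k}}-\bm{T}_{i,j,k}\|_F^2+\|\frac{\bm{Z}_{j,k}\bm{Z}_{j,k}^T}{m_{j,k}}-\bm{T}_{i,j,k}\|_F^2\big]\Big\}$. Iteration (dual step size $\rho>0$): start from a feasible $\bm{Z}^{(0)}$ and zero duals, with $\bm{T}^{(0)}$ given by the $\bm{T}$-step below at $t=0$. For $t\ge1$: $\bm{U}_{i,j,k}^{(t)}=\bm{U}_{i,j,k}^{(t-1)}+\rho[\bm{Z}_{i,k}^{(t-1)}{\bm{Z}_{i,k}^{(t-1)}}^T/m_{i,k}-\bm{T}_{i,j,k}^{(t-1)}]$; $\bm{V}_{i,j,k}^{(t)}=\bm{V}_{i,j,k}^{(t-1)}+\rho[\bm{Z}_{j,k}^{(t-1)}{\bm{Z}_{j,k}^{(t-1)}}^T/m_{j,k}-\bm{T}_{i,j,k}^{(t-1)}]$; $\bm{Z}^{(t)}\in\arg\min_{\bm{Z}\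 \text{feasible}}\mathcal{L}(\bm{U}^{(t)},\bm{V}^{(t)},\bm{Z},\bm{T}^{(t-1)})$; $\bm{T}_{i,j,k}^{(t)}=\arg\min_{\bm{T}}\{-\mathrm{tr}[(\bm{U}_{i,j,k}^{(t)}+\bm{V}_{i,j,k}^{(t)})^T\bm{T}]+\frac{\gamma}{2}[\|\bm{Z}_{i,k}^{(t)}{\bm{Z}_{i,k}^{(t)}}^T/m_{i,k}-\bm{T}\|_F^2+\|\bm{Z}_{j,k}^{(t)}{\bm{Z}_{j,k}^{(t)}}^T/m_{j,k}-\bm{T}\|_F^2]\}$. $\bm{Y}_i^{(t)}$ denotes the collection $\{\bm{Y}_{i,j,k}^{(t)}\}_{j\in\mathcal{N}_i,k}$. *)

(* Defs.v *)
From HB Require Import structures.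
From mathcomp Require Import all_boot all_order all_algebra.
From mathcomp Require Import reals exp.

Set Implicit Arguments.
Unset Strict Implicit.
Unset Printing Implicit Defensive.

Import Order.TTheory GRing.Theory Num.Theory.
Local Open Scope ring_scope.

Section DecentralizedMCR2.
Variable R : realType.
Variables (N K d : nat).
(* m i k = m_{i,k}: number of columns of node i carrying label k. *)
Variable m : 'I_N -> 'I_K -> nat.
(* adjacency relation of the graph: j \in N_i  <->  e i j *)
Variable e : rel 'I_N.
Variables (eps gamma : R).

(* Node i's data, given by its label blocks Z_{i,k} in R^{d x m_{i,k}}. *)
Definition nodecfg (i : 'I_N) := forall k : 'I_K, 'M[R]_(d, m i k).
Definition config := forall i : 'I_N, nodecfg i.

Definition frob2 (p q : nat) (A : 'M[R]_(p, q)) : R :=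
  \sum_(a < p) \sum_(b < q) A a b ^+ 2.

Definition mnode (i : 'I_N) : nat := (\sum_(k < K) m i k)%N.
Definition mtot : nat := (\sum_(i < N) mnode i)%N.

(* Z_i Z_i^T = sum of the label blocks' Gram matrices (independent of
   column ordering). *)
Definition gram_node (i : 'I_N) (Zi : nodecfg i) : 'M[R]_d :=
  \sum_(k < K) (Zi k *m (Zi k)^T).

Definition gramk (i : 'I_N) (Zi : nodecfg i) (k : 'I_K) : 'M[R]_d :=
  ((m i k)%:R)^-1 *: (Zi k *m (Zi k)^T).

Definition logdet_term (w : nat) (G : 'M[R]_d) : R :=
  w%:R / (2 * mtot%:R) *
    ln (\det (1%:M + (d%:R / (w%:R * eps ^+ 2)) *: G)).

Definition Rnode (i : 'I_N) (Zi : nodecfg i) : R :=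
  logdet_term (mnode i) (gram_node Zi).

Definition Rcnode (i : 'I_N) (Zi : nodecfg i) : R :=
  \sum_(k < K) logdet_term (m i k) (Zi k *m (Zi k)^T).

Definition node_feasible (i : 'I_N) (Zi : nodecfg i) : Prop :=
  forall k : 'I_K, frob2 (Zi k) = (m i k)%:R.

Definition feasible (Z : config) : Prop := forall i, node_feasible (Z i).

(* Auxiliary / dual variables, indexed by (i, j, k); only entries with
   e i j (i.e. j \in N_i) are meaningful. *)
Definition dualvar := 'I_N -> 'I_N -> 'I_K -> 'M[R]_d.

Definition lagrangian (Z : config) (T U V : dualvar) : R :=
  \sum_(i < N)
    (Rcnode (Z i) - Rnode (Z i)
     + \sum_(j < N | e i j) \sum_(k < K)
         (\tr ((U i j k)^T *m (gramk (Z i) k - T i j k))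
          + \tr ((V i j k)^T *m (gramk (Z j) k - T i j k)))
     + gamma / 2 * \sum_(j < N | e i j) \sum_(k < K)
         (frob2 (gramk (Z i) k - T i j k) + frob2 (gramk (Z j) k - T i j k))).

(* Objective of the T-step for one triple (i,j,k):
   -tr[(U+V)^T T] + gamma/2 (||G_i - T||^2 + ||G_j - T||^2). *)
Definition Tobj (S Gi Gj T : 'M[R]_d) : R :=
  - \tr (S^T *m T) + gamma / 2 * (frob2 (Gi - T) + frob2 (Gj - T)).

Definition Ydual (U V : dualvar) : dualvar := fun i j k => U i j k + V j i k.

(* L'(Y_i, Z_i), with Zold = Z^{(t-1)} and Yi j k = Y_{i,j,k}. *)
Definition Lprime (i : 'I_N) (Yi : 'I_N -> 'I_K -> 'M[R]_d) (Zold : config)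
    (Zi : nodecfg i) : R :=
  Rcnode Zi - Rnode Zi
  + \sum_(j < N | e i j) \sum_(k < K)
      (\tr ((Yi j k)^T *m (gramk Zi k - gramk (Zold j) k))
       + gamma * frob2 (gramk Zi k
                        - 2^-1 *: (gramk (Zold i) k + gramk (Zold j) k))).

End DecentralizedMCR2.

(* Main.v *)
Require Import Defs.
From HB Require Import structures.
From mathcomp Require Import all_boot all_order all_algebra.
From mathcomp Require Import reals exp.
From mathcomp Require Import ring lra.
Import Order.TTheory GRing.Theory Num.Theory.
Local Open Scope ring_scope.
Lemma trTmul (R : realType) p q (A B : 'M[R]_(p, q)) :
  \tr (A^T *m B) = \sum_(a < p) \sum_(b < q) A a b * B a b.
Proof.
rewrite /mxtrace; under eq_bigr do rewrite !mxE.
rewrite exchange_big; apply: eq_bigr => a _; apply: eq_bigr => b _.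
by rewrite mxE.
Qed.

Lemma Tobj_sum (R : realType) d (gamma : R) (S Gi Gj X : 'M[R]_d) :
  Tobj gamma S Gi Gj X = \sum_(a < d) \sum_(b < d)
    (- (S a b * X a b) + gamma / 2 * ((Gi a b - X a b) ^+ 2 + (Gj a b - X a b) ^+ 2)).
Proof.
rewrite /Tobj trTmul /frob2 -sumrN -big_split mulr_sumr -big_split /=.
apply: eq_bigr => a _.
rewrite -sumrN -big_split mulr_sumr -big_split /=.
by apply: eq_bigr => b _; rewrite !mxE.
Qed.

Lemma tstep_min (R : realType) d (gamma : R) (S Gi Gj T : 'M[R]_d) :
  0 < gamma ->
  (forall T', Tobj gamma S Gi Gj T <= Tobj gamma S Gi Gj T') ->
  T = 2^-1 *: (Gi + Gj) + (2 * gamma)^-1 *: S.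
Proof.
move=> g0 H.
set Ts := 2^-1 *: (Gi + Gj) + (2 * gamma)^-1 *: S.
have := H Ts.
have key : Tobj gamma S Gi Gj T - Tobj gamma S Gi Gj Ts =
   gamma * \sum_(a < d) \sum_(b < d) (T a b - Ts a b) ^+ 2.
  rewrite !Tobj_sum -sumrB mulr_sumr; apply: eq_bigr => a _.
  rewrite -sumrB mulr_sumr; apply: eq_bigr => b _.
  rewrite /Ts !mxE. field. by rewrite gt_eqF.
rewrite -subr_le0 key pmulr_rle0 // => Hle.
have H0 : \sum_(a < d) \sum_(b < d) (T a b - Ts a b) ^+ 2 = 0.
  apply/eqP; rewrite eq_le Hle /=; apply: sumr_ge0 => a _; apply: sumr_ge0 => b _.
  exact: sqr_ge0.
apply/matrixP => a b.
have /psumr_eq0P H1 : \sum_(a < d) \sum_(b < d) (T a b - Ts a b) ^+ 2 = 0 by [].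
have := H1 (fun a _ => sumr_ge0 _ (fun b _ => sqr_ge0 _)) a isT.
move/psumr_eq0P => /(_ (fun b _ => sqr_ge0 _) b isT) /eqP.
by rewrite sqrf_eq0 subr_eq0 => /eqP.
Qed.

Lemma trZ (R : realType) p q (a : R) (A B : 'M[R]_(p, q)) :
  \tr ((a *: A)^T *m B) = a * \tr (A^T *m B).
Proof.
rewrite !trTmul mulr_sumr; apply: eq_bigr => i _; rewrite mulr_sumr.
by apply: eq_bigr => j _; rewrite !mxE mulrA.
Qed.

Lemma trB (R : realType) p q (A B C : 'M[R]_(p, q)) :
  \tr (A^T *m (B - C)) = \tr (A^T *m B) - \tr (A^T *m C).
Proof.
rewrite !trTmul -sumrB; apply: eq_bigr => i _; rewrite -sumrB.
by apply: eq_bigr => j _; rewrite !mxE mulrBr.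
Qed.

Lemma sum_swap (R : realType) n (e : rel 'I_n) (F : 'I_n -> 'I_n -> R) :
  symmetric e ->
  \sum_(i < n) \sum_(j < n | e i j) F i j = \sum_(i < n) \sum_(j < n | e i j) F j i.
Proof.
move=> se.
rewrite (eq_bigr (fun i => \sum_(j < n) if e i j then F i j else 0));
  last by move=> i _; rewrite big_mkcond.
rewrite exchange_big /=.
rewrite [RHS](eq_bigr (fun i => \sum_(j < n) if e i j then F j i else 0));
  last by move=> i _; rewrite big_mkcond.
apply: eq_bigr => i _; apply: eq_bigr => j _.
by rewrite se.
Qed.

Theorem proposition1 (R : realType) (N K d : nat) (m : 'I_N -> 'I_K -> nat)
    (e : rel 'I_N) (eps gamma rho : R)
    (Z : nat -> config R d m) (T U V : nat -> dualvar R N K d) :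
  (* undirected (simple) connected graph *)
  symmetric e -> irreflexive e -> (forall i j, connect e i j) ->
  (forall i k, (0 < m i k)%N) -> 0 < eps -> 0 < gamma -> 0 < rho ->
  (* initialization *)
  feasible (Z 0%N) ->
  (forall i j k, e i j -> U 0%N i j k = 0 /\ V 0%N i j k = 0) ->
  (* T-step, for every t >= 0 (T^{(0)} included) *)
  (forall t i j k, e i j -> forall T' : 'M[R]_d,
     Tobj gamma (U t i j k + V t i j k) (gramk (Z t i) k) (gramk (Z t j) k)
          (T t i j k)
     <= Tobj gamma (U t i j k + V t i j k) (gramk (Z t i) k) (gramk (Z t j) k) T') ->
  (* dual steps: U^{(t+1)}, V^{(t+1)} *)
  (forall t i j k, e i j ->
     U t.+1 i j k = U t i j k + rho *: (gramk (Z t i) k - T t i j k)) ->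
  (forall t i j k, e i j ->
     V t.+1 i j k = V t i j k + rho *: (gramk (Z t j) k - T t i j k)) ->
  (* primal step: Z^{(t+1)} minimizes L(U^{(t+1)}, V^{(t+1)}, ., T^{(t)}) *)
  (forall t, feasible (Z t.+1) /\
     forall Z' : config R d m, feasible Z' ->
       lagrangian e eps gamma (Z t.+1) (T t) (U t.+1) (V t.+1)
       <= lagrangian e eps gamma Z' (T t) (U t.+1) (V t.+1)) ->
  forall t : nat,
    (forall i j k, e i j ->
       U t i j k = V t j i k /\ Ydual (U t) (V t) i j k = 2%:R *: U t i j k)
    /\ (forall i j k, e i j ->
       Ydual (U 0%N) (V 0%N) i j k = 0
       /\ Ydual (U t.+1) (V t.+1) i j k
          = Ydual (U t) (V t) i j k + rho *: (gramk (Z t i) k - gramk (Z t j) k))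
    /\ (forall Z' : config R d m, feasible Z' ->
         ((forall Z'' : config R d m, feasible Z'' ->
             lagrangian e eps gamma Z' (T t) (U t.+1) (V t.+1)
             <= lagrangian e eps gamma Z'' (T t) (U t.+1) (V t.+1))
          <->
          (forall i (Zi : nodecfg R d m i), node_feasible Zi ->
             Lprime e eps gamma (Ydual (U t.+1) (V t.+1) i) (Z t) (Z' i)
             <= Lprime e eps gamma (Ydual (U t.+1) (V t.+1) i) (Z t) Zi))).
Proof.
move=> se _ _ _ _ g0 _ _ init Tst Ust Vst Zst.
have Tform : forall t i j k, e i j -> T t i j k =
    2^-1 *: (gramk (Z t i) k + gramk (Z t j) k)
    + (2 * gamma)^-1 *: (U t i j k + V t i j k).
  by move=> t i j k eij; apply: tstep_min g0 (Tst t i j k eij).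
have inv : forall t i j k, e i j ->
    U t i j k = V t j i k /\ U t i j k + U t j i k = 0.
  elim=> [|t IH] i j k eij; have eji : e j i by rewrite se.
    case: (init _ _ k eij) => -> _; case: (init _ _ k eji) => -> ->.
    by rewrite addr0.
  have Tij : T t i j k = 2^-1 *: (gramk (Z t i) k + gramk (Z t j) k).
    by rewrite Tform // -(IH j i k eji).1 (IH i j k eij).2 scaler0 addr0.
  have Tji : T t j i k = 2^-1 *: (gramk (Z t i) k + gramk (Z t j) k).
    by rewrite Tform // -(IH i j k eij).1 (addrC (U t j i k)) (IH i j k eij).2 scaler0 addr0 addrC.
  rewrite Ust // Vst // Ust // Tij Tji (IH i j k eij).1.
  split => //.
  have := (IH i j k eij).2; rewrite (IH i j k eij).1.
  move: (V t j i k) (U t j i k) (gramk (Z t i) k) (gramk (Z t j) k) => A B Gi Gj.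
  move=> /matrixP s; apply/matrixP => a b; have := s a b; rewrite !mxE => sab.
  rewrite (_ : B a b = - A a b); last by lra.
  by field.
have Tmid : forall t i j k, e i j ->
    T t i j k = 2^-1 *: (gramk (Z t i) k + gramk (Z t j) k).
  move=> t i j k eij; have eji : e j i by rewrite se.
  by rewrite Tform // -(inv t j i k eji).1 (inv t i j k eij).2 scaler0 addr0.
move=> t0; move: t0 => t; split; [|split].
- move=> i j k eij; have [h1 _] := inv t i j k eij; split => //.
  by rewrite /Ydual -h1 scaler_nat mulr2n.
- move=> i j k eij; have eji : e j i by rewrite se.
  split.
    rewrite /Ydual; case: (init _ _ k eij) => -> _.
    by case: (init _ _ k eji) => _ ->; rewrite addr0.
  rewrite /Ydual Ust // Vst // Tmid // Tmid //.
  move: (U t i j k) (V t j i k) (gramk (Z t i) k) (gramk (Z t j) k) => A B Gi Gj.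
  by apply/matrixP => a b; rewrite !mxE; field.
have VU : forall i j k, e i j -> V t.+1 i j k = U t.+1 j i k.
  move=> i j k eij; have eji : e j i by rewrite se.
  by rewrite (inv t.+1 j i k eji).1.
have YU : forall i j k, e i j ->
    Ydual (U t.+1) (V t.+1) i j k = 2%:R *: U t.+1 i j k.
  by move=> i j k eij; rewrite /Ydual -(inv t.+1 i j k eij).1 scaler_nat mulr2n.
have Tsym : forall i j k, e i j -> T t j i k = T t i j k.
  move=> i j k eij; have eji : e j i by rewrite se.
  by rewrite !Tmid // addrC.
pose h := fun (Z0 : config R d m) (i j : 'I_N) (k : 'I_K) =>
  \tr ((U t.+1 i j k)^T *m (gramk (Z0 i) k - T t i j k))
  + gamma / 2 * frob2 (gramk (Z0 i) k - T t i j k).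
pose C := \sum_(i < N) \sum_(j < N | e i j) \sum_(k < K)
   (2 * \tr ((U t.+1 i j k)^T *m (gramk (Z t j) k - T t i j k))).
have decomp : forall Z0 : config R d m,
    lagrangian e eps gamma Z0 (T t) (U t.+1) (V t.+1)
    = \sum_(i < N) Lprime e eps gamma (Ydual (U t.+1) (V t.+1) i) (Z t) (Z0 i) + C.
  move=> Z0.
  have E1 : lagrangian e eps gamma Z0 (T t) (U t.+1) (V t.+1) =
      \sum_(i < N) (Rcnode eps (Z0 i) - Rnode eps (Z0 i))
      + \sum_(i < N) \sum_(j < N | e i j) \sum_(k < K) (h Z0 i j k + h Z0 j i k).
    rewrite /lagrangian -big_split /=; apply: eq_bigr => i _.
    rewrite -addrA; congr (_ + _).
    rewrite mulr_sumr -big_split /=; apply: eq_bigr => j eij.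
    have eji : e j i by rewrite se.
    rewrite mulr_sumr -big_split /=; apply: eq_bigr => k _.
    rewrite /h VU // Tsym //. rewrite mulrDr. lra.
  have E2 : \sum_(i < N) Lprime e eps gamma (Ydual (U t.+1) (V t.+1) i) (Z t) (Z0 i) + C =
      \sum_(i < N) (Rcnode eps (Z0 i) - Rnode eps (Z0 i))
      + \sum_(i < N) \sum_(j < N | e i j) \sum_(k < K) (2 * h Z0 i j k).
    rewrite /Lprime big_split /= -addrA; congr (_ + _).
    rewrite /C -big_split; apply: eq_bigr => i _.
    rewrite -big_split; apply: eq_bigr => j eij.
    rewrite -big_split; apply: eq_bigr => k _.
    rewrite /h YU // trZ !trB Tmid //; rewrite /=; by field.
  rewrite E1 E2; congr (_ + _).
  transitivity (\sum_(i < N) \sum_(j < N | e i j) \sum_(k < K) h Z0 i j k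
     + \sum_(i < N) \sum_(j < N | e i j) \sum_(k < K) h Z0 j i k).
    rewrite -big_split; apply: eq_bigr => i _.
    rewrite -big_split; apply: eq_bigr => j _.
    by rewrite -big_split.
  have := @sum_swap R N e (fun i j => \sum_(k < K) h Z0 j i k) se; rewrite /= => ->.
  rewrite -big_split; apply: eq_bigr => i _.
  rewrite -big_split; apply: eq_bigr => j _.
  rewrite -big_split; apply: eq_bigr => k _.
  by rewrite /= mulr_natl mulr2n.
move=> Z' fZ'; split.
  move=> Hmin i Zi fZi.
  have fZ'' : feasible (dfwith Z' Zi).
    by move=> i'; case: dfwithP => [|j _]; [exact: fZi | exact: fZ'].
  have := Hmin _ fZ''; rewrite !decomp lerD2r.
  rewrite (bigD1 i) //= [X in _ <= X](bigD1 i) //= dfwith_in.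
  rewrite [X in _ <= _ + X](eq_bigr (fun j => Lprime e eps gamma (Ydual (U t.+1) (V t.+1) j) (Z t) (Z' j))).
    by rewrite lerD2r.
  by move=> j ji; rewrite dfwith_out // eq_sym.
move=> Hi Z'' fZ''; rewrite !decomp lerD2r; apply: ler_sum => i _; exact: Hi.
Qed.
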